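(* Let $Q$ be a power associative loop such that the factor loop $Q/Z(Q)$ is a cyclic group. Then $Q$ is an abelian group. *)

(* Defs.v *)
From Stdlib Require Import ZArith.
Open Scope Z_scope.

Section Loops.
Variable T : Type.
Variables (mul ldiv rdiv : T -> T -> T) (e : T).

(* A loop (T, *, \, /, e): a quasigroup with two-sided identity e.
   ldiv a b = a\b is the unique x with a*x = b; rdiv b a = b/a the unique y with y*a = b. *)
Definition is_loop : Prop :=
  (forall a b, mul a (ldiv a b) = b) /\
  (forall a b, ldiv a (mul a b) = b) /\
  (forall a b, mul (rdiv b a) a = b) /\
  (forall a b, rdiv (mul b a) a = b) /\
  (forall x, mul e x = x) /\
  (forall x, mul x e = x).

Inductive gen (x : T) : T -> Prop :=
  | gen_x : gen x x
  | gen_e : gen x e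
  | gen_mul a b : gen x a -> gen x b -> gen x (mul a b)
  | gen_ldiv a b : gen x a -> gen x b -> gen x (ldiv a b)
  | gen_rdiv a b : gen x a -> gen x b -> gen x (rdiv a b).

Definition power_associative : Prop :=
  forall x a b c, gen x a -> gen x b -> gen x c ->
    mul (mul a b) c = mul a (mul b c).

Definition in_center (z : T) : Prop :=
  (forall x, mul z x = mul x z) /\
  (forall x y, mul (mul z x) y = mul z (mul x y)) /\
  (forall x y, mul (mul x z) y = mul x (mul z y)) /\
  (forall x y, mul (mul x y) z = mul x (mul y z)).

Fixpoint npow (a : T) (n : nat) : T :=
  match n with O => e | S m => mul (npow a m) a end.
Definition linv (a : T) : T := ldiv a e.
Definition zpow (a : T) (k : Z) : T :=
  match k with
  | Z0 => e
  | Zpos p => npow a (Pos.to_nat p)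
  | Zneg p => npow (linv a) (Pos.to_nat p)
  end.

(* Q/Z(Q) is a cyclic group: there is a Z(Q)-coset aZ(Q) such that every coset
   xZ(Q) is one of its integer powers (aZ(Q))^k = a^k Z(Q), i.e. x = a^k * z with z central. *)
Definition center_quotient_cyclic : Prop :=
  exists a, forall x, exists (k : Z) z, in_center z /\ x = mul (zpow a k) z.

Definition abelian_group : Prop :=
  (forall x y z, mul (mul x y) z = mul x (mul y z)) /\
  (forall x y, mul x y = mul y x).
End Loops.

(* Main.v *)
Require Import Defs.
From Stdlib Require Import ZArith Lia.

Lemma gen_npow T mul ldiv rdiv e a b n :
  gen T mul ldiv rdiv e a b -> gen T mul ldiv rdiv e a (npow T mul e b n).
Proof. intros H; induction n; simpl; constructor; auto. Qed.

Lemma npow_add T mul ldiv rdiv e a b m n :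
  is_loop T mul ldiv rdiv e -> power_associative T mul ldiv rdiv e ->
  gen T mul ldiv rdiv e a b ->
  npow T mul e b (m + n) = mul (npow T mul e b m) (npow T mul e b n).
Proof.
  intros [_ [_ [_ [_ [_ Hr]]]]] PA Hb; unfold power_associative in PA. induction n.
  - rewrite Nat.add_0_r; simpl; now rewrite Hr.
  - rewrite Nat.add_succ_r; simpl. rewrite IHn. apply (PA a); auto using gen_npow.
Qed.

Lemma npow_comm T mul ldiv rdiv e a b m n :
  is_loop T mul ldiv rdiv e -> power_associative T mul ldiv rdiv e ->
  gen T mul ldiv rdiv e a b ->
  mul (npow T mul e b m) (npow T mul e b n) = mul (npow T mul e b n) (npow T mul e b m).
Proof.
  intros L PA Hb. rewrite <- (npow_add T mul ldiv rdiv e a b m n), <- (npow_add T mul ldiv rdiv e a b n m) by auto.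
  now rewrite Nat.add_comm.
Qed.

Lemma mixed_comm T mul ldiv rdiv e a m n :
  is_loop T mul ldiv rdiv e -> power_associative T mul ldiv rdiv e ->
  mul (npow T mul e a m) (npow T mul e (linv T ldiv e a) n)
  = mul (npow T mul e (linv T ldiv e a) n) (npow T mul e a m).
Proof.
  intros L PA; unfold power_associative in PA. pose proof L as [H1 [H2 [_ [_ [Hl Hr]]]]].
  set (c := linv T ldiv e a).
  assert (Gc : gen T mul ldiv rdiv e a c) by (unfold c, linv; constructor; constructor).
  assert (Ga : gen T mul ldiv rdiv e a a) by constructor.
  assert (ac : mul a c = e) by (unfold c, linv; apply H1).
  assert (ca : mul c a = e).
  { transitivity (ldiv a (mul a (mul c a))). symmetry; apply H2.
    rewrite <- (PA a) by auto. rewrite ac, Hl. rewrite <- (Hr a) at 2. apply H2. }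
  assert (A : forall n, mul a (npow T mul e c n) = mul (npow T mul e c n) a).
  { induction n0; simpl. now rewrite Hl, Hr.
    rewrite <- (PA a) by (auto using gen_npow). rewrite IHn0.
    rewrite (PA a) by (auto using gen_npow). rewrite ac, Hr.
    rewrite (PA a) by (auto using gen_npow). now rewrite ca, Hr. }
  induction m; simpl. now rewrite Hl, Hr.
  rewrite (PA a) by (auto using gen_npow). rewrite A.
  rewrite <- (PA a) by (auto using gen_npow). rewrite IHm.
  rewrite (PA a) by (auto using gen_npow). reflexivity.
Qed.

Lemma zpow_gen T mul ldiv rdiv e a k :
  gen T mul ldiv rdiv e a (zpow T mul ldiv e a k).
Proof.
  destruct k; simpl. constructor. apply gen_npow; constructor.
  apply gen_npow. unfold linv; constructor; constructor.
Qed.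

Lemma zpow_comm T mul ldiv rdiv e a i j :
  is_loop T mul ldiv rdiv e -> power_associative T mul ldiv rdiv e ->
  mul (zpow T mul ldiv e a i) (zpow T mul ldiv e a j)
  = mul (zpow T mul ldiv e a j) (zpow T mul ldiv e a i).
Proof.
  intros L PA; unfold power_associative in PA. pose proof L as [_ [_ [_ [_ [Hl Hr]]]]].
  assert (Gc : gen T mul ldiv rdiv e a (linv T ldiv e a)) by (unfold linv; constructor; constructor).
  assert (Ga : gen T mul ldiv rdiv e a a) by constructor.
  destruct i, j; simpl; rewrite ?Hl, ?Hr; auto.
  - eapply npow_comm; eauto.
  - eapply mixed_comm; eauto.
  - symmetry; eapply mixed_comm; eauto.
  - eapply npow_comm; eauto.
Qed.

Lemma center_mul T mul z w :
  in_center T mul z -> in_center T mul w -> in_center T mul (mul z w).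
Proof.
  intros [z1 [z2 [z3 z4]]] [w1 [w2 [w3 w4]]]. split; [|split; [|split]]; intros.
  - rewrite z2, w1, <- z2, z1, z3. reflexivity.
  - rewrite z2, z2, w2, <- z2. reflexivity.
  - rewrite <- z3, w3, z3, z2. reflexivity.
  - rewrite <- w4, z4, w4, w4. reflexivity.
Qed.

Lemma swap T mul p q z w :
  in_center T mul z -> in_center T mul w ->
  mul (mul p z) (mul q w) = mul (mul p q) (mul z w).
Proof.
  intros [z1 [z2 [z3 z4]]] [w1 [w2 [w3 w4]]].
  rewrite (z3 p), <- (z2 q w), (z1 q), (z3 q w).
  rewrite <- (w4 (mul p q) z), (z4 p q), (w4 p (mul q z)), (w4 q z). reflexivity.
Qed.

Theorem proposition4p1 (T : Type) (mul ldiv rdiv : T -> T -> T) (e : T) :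
  is_loop T mul ldiv rdiv e ->
  power_associative T mul ldiv rdiv e ->
  center_quotient_cyclic T mul ldiv e ->
  abelian_group T mul.
Proof.
  intros L PA [a Ha]; unfold power_associative in PA. split.
  - intros x y u.
    destruct (Ha x) as [i [z [Cz ->]]]. destruct (Ha y) as [j [w [Cw ->]]].
    destruct (Ha u) as [k [v [Cv ->]]].
    rewrite (swap _ _ _ _ z w) by auto. rewrite (swap _ _ _ _ (mul z w) v) by auto using center_mul.
    rewrite (swap _ _ _ _ w v) by auto. rewrite (swap _ _ _ _ z (mul w v)) by auto using center_mul.
    rewrite (PA a (zpow T mul ldiv e a i) (zpow T mul ldiv e a j) (zpow T mul ldiv e a k)) by apply zpow_gen.
    destruct Cz as [_ [z2 _]]. now rewrite z2.
  - intros x y.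
    destruct (Ha x) as [i [z [Cz ->]]]. destruct (Ha y) as [j [w [Cw ->]]].
    rewrite !swap by auto. rewrite (zpow_comm T mul ldiv rdiv e a i j) by auto.
    rewrite (swap T mul _ _ w z) by auto. destruct Cz as [z1 _]. rewrite (z1 w). reflexivity.
Qed.
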